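(* Every implication algebra $\mathfrak{A}=(A,\to)$ with $A$ finite has a finite representation, i.e. there is an injective map $h$ from $A$ into $\wp(\top)$ for some binary relation $\top\subseteq X\times X$ with $X$ finite, such that $h(a\to b)=(\top\setminus h(a))\cup h(b)$ for all $a,b\in A$.
   Context: An implication algebra is $(A,\to)$ satisfying, for all $a,b,c$: $(a\to b)\to a=a$; $(a\to b)\to b=(b\to a)\to a$; $a\to(b\to c)=b\to(a\to c)$. *)

(* Defs.v *)
From mathcomp Require Import all_boot.
Set Implicit Arguments. Unset Strict Implicit. Unset Printing Implicit Defensive.

Definition implication_algebra (A : Type) (imp : A -> A -> A) : Prop :=
  [/\ (forall a b : A, imp (imp a b) a = a),
      (forall a b : A, imp (imp a b) b = imp (imp b a) a)
    & (forall a b c : A, imp a (imp b c) = imp b (imp a c))].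

Definition has_finite_representation (A : Type) (imp : A -> A -> A) : Prop :=
  exists (X : finType) (T : {set X * X}) (h : A -> {set X * X}),
    [/\ (forall a, h a \subset T),
        injective h
      & (forall a b, h (imp a b) = (T :\: h a) :|: h b)].

(* Main.v *)
Require Import Defs.
From mathcomp Require Import all_boot.
Set Implicit Arguments. Unset Strict Implicit. Unset Printing Implicit Defensive.

Section IA.
Variable A : finType.
Variable imp : A -> A -> A.
Hypothesis I1 : forall a b, imp (imp a b) a = a.
Hypothesis I2 : forall a b, imp (imp a b) b = imp (imp b a) a.
Hypothesis I3 : forall a b c, imp a (imp b c) = imp b (imp a c).

Lemma E1 y u : (imp y y) = (imp u u).
Proof.
  have := I1 u (imp y y).
  have := I1 u (imp (imp u u) y).
  have := I1 u (imp (imp y y) u).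
  have := I1 y (imp (imp u u) y).
  have := I1 (imp u u) (imp u y).
  have := I2 (imp y y) (imp u u).
  have := I3 u (imp u u) y.
  have := I3 u (imp y y) u.
  have := I3 u (imp (imp u u) (imp u y)) u.
  have := I3 u (imp (imp y y) (imp u u)) u.
  have := I3 y u y.
  have := I3 y (imp u u) y.
  have := I3 y (imp (imp u u) (imp y y)) y.
  congruence.
Qed.
Lemma E2 u y : (imp (imp u u) y) = y.
Proof.
  have := I1 u (imp (imp y y) u).
  have := I1 y y.
  have := I1 y (imp u u).
  have := I1 y (imp (imp u u) y).
  have := I1 y (imp (imp y y) u).
  have := I1 (imp y y) (imp y u).
  have := I2 (imp u u) (imp y y).
  have := I3 u y u.
  have := I3 u (imp y y) u.
  have := I3 u (imp (imp y y) (imp u u)) u.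
  have := I3 y (imp u u) y.
  have := I3 y (imp y y) u.
  have := I3 y (imp (imp u u) (imp y y)) y.
  have := I3 y (imp (imp y y) (imp y u)) y.
  congruence.
Qed.
Lemma E3 u y : (imp y (imp u u)) = (imp u u).
Proof.
  have := I1 u u.
  have := I1 u (imp y u).
  have := I1 u (imp (imp u y) y).
  have := I1 u (imp (imp y y) u).
  have := I1 y u.
  have := I1 y y.
  have := I1 y (imp u u).
  have := I1 y (imp (imp u u) y).
  have := I1 y (imp (imp y y) u).
  have := I1 (imp u u) y.
  have := I1 (imp y u) (imp u u).
  have := I1 (imp y y) (imp y u).
  have := I2 u y.
  have := I2 (imp u u) (imp y y).
  have := I2 (imp y u) u.
  have := I3 u y u.
  have := I3 u (imp y u) u.
  have := I3 u (imp y y) u.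
  have := I3 u (imp (imp u u) y) u.
  have := I3 u (imp (imp y y) (imp u u)) u.
  have := I3 y (imp u u) y.
  have := I3 y (imp u (imp y u)) u.
  have := I3 y (imp y y) u.
  have := I3 y (imp (imp u u) (imp y y)) y.
  have := I3 y (imp (imp y u) (imp u u)) u.
  have := I3 y (imp (imp y y) (imp y u)) y.
  have := I3 (imp u u) (imp (imp u y) y) u.
  have := I3 (imp u u) (imp (imp y u) y) u.
  congruence.
Qed.
Lemma K u y x : (imp y (imp x y)) = (imp u u).
Proof.
  have := I1 u u.
  have := I1 u (imp x u).
  have := I1 u (imp (imp u x) x).
  have := I1 u (imp (imp x x) u).
  have := I1 u (imp (imp y y) u).
  have := I1 x u.
  have := I1 x x.
  have := I1 x (imp u u).
  have := I1 x (imp (imp u u) x).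
  have := I1 x (imp (imp x x) u).
  have := I1 y (imp u u).
  have := I1 y (imp (imp u u) y).
  have := I1 y (imp (imp y y) u).
  have := I1 (imp u u) x.
  have := I1 (imp x u) (imp u u).
  have := I1 (imp x x) (imp x u).
  have := I1 (imp y y) (imp y u).
  have := I2 u x.
  have := I2 (imp u u) (imp x x).
  have := I2 (imp u u) (imp y y).
  have := I2 (imp x u) u.
  have := I3 u x u.
  have := I3 u y u.
  have := I3 u (imp x u) u.
  have := I3 u (imp x x) u.
  have := I3 u (imp y y) u.
  have := I3 u (imp (imp u u) x) u.
  have := I3 u (imp (imp x x) (imp u u)) u.
  have := I3 u (imp (imp y y) (imp u u)) u.
  have := I3 x (imp u u) x.
  have := I3 x (imp u (imp x u)) u.
  have := I3 x (imp x x) u.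
  have := I3 x (imp (imp u u) (imp x x)) x.
  have := I3 x (imp (imp x u) (imp u u)) u.
  have := I3 x (imp (imp x x) (imp x u)) x.
  have := I3 y x y.
  have := I3 y (imp u u) y.
  have := I3 y (imp y y) u.
  have := I3 y (imp (imp u u) (imp y y)) y.
  have := I3 y (imp (imp y y) (imp y u)) y.
  have := I3 (imp u u) (imp (imp u x) x) u.
  have := I3 (imp u u) (imp (imp x u) x) u.
  congruence.
Qed.
Lemma D p q r : (imp p (imp q r)) = (imp (imp p q) (imp p r)).
Proof.
  have := I1 p p.
  have := I1 p q.
  have := I1 p r.
  have := I1 p (imp p p).
  have := I1 p (imp q p).
  have := I1 p (imp q q).
  have := I1 p (imp q r).
  have := I1 p (imp r p).
  have := I1 p (imp r r).
  have := I1 p (imp (imp q q) p).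
  have := I1 p (imp (imp r r) p).
  have := I1 q p.
  have := I1 q r.
  have := I1 q (imp p p).
  have := I1 q (imp p q).
  have := I1 q (imp (imp p p) p).
  have := I1 q (imp (imp p p) q).
  have := I1 q (imp (imp q q) p).
  have := I1 r p.
  have := I1 r r.
  have := I1 r (imp p p).
  have := I1 r (imp p r).
  have := I1 r (imp p (imp p p)).
  have := I1 r (imp p (imp r p)).
  have := I1 r (imp q p).
  have := I1 r (imp (imp p p) p).
  have := I1 r (imp (imp p p) r).
  have := I1 r (imp (imp p q) r).
  have := I1 r (imp (imp r r) p).
  have := I1 (imp p p) p.
  have := I1 (imp p q) p.
  have := I1 (imp p q) r.
  have := I1 (imp p q) (imp q p).
  have := I1 (imp p r) p.
  have := I1 (imp p r) (imp q r).
  have := I1 (imp p r) (imp r p).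
  have := I1 (imp p (imp p p)) p.
  have := I1 (imp p (imp q p)) p.
  have := I1 (imp p (imp q q)) p.
  have := I1 (imp p (imp q r)) p.
  have := I1 (imp p (imp r p)) p.
  have := I1 (imp p (imp r r)) p.
  have := I1 (imp q q) (imp q p).
  have := I1 (imp q (imp p q)) q.
  have := I1 (imp r p) r.
  have := I1 (imp r r) (imp r p).
  have := I1 (imp r (imp p r)) r.
  have := I2 q r.
  have := I2 (imp p p) (imp q q).
  have := I2 (imp p p) (imp r r).
  have := I2 (imp p q) r.
  have := I2 (imp p r) (imp q r).
  have := I2 (imp p (imp p q)) r.
  have := I2 (imp (imp p q) r) r.
  have := I3 p q p.
  have := I3 p q q.
  have := I3 p q (imp p (imp p (imp (imp r p) r))).
  have := I3 p q (imp p (imp (imp r p) r)).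
  have := I3 p q (imp (imp r p) r).
  have := I3 p q (imp (imp (imp p p) p) q).
  have := I3 p q (imp (imp (imp p p) p) r).
  have := I3 p q (imp (imp (imp p r) (imp q r)) r).
  have := I3 p q (imp (imp (imp p (imp q p)) q) q).
  have := I3 p r p.
  have := I3 p r q.
  have := I3 p r r.
  have := I3 p r (imp p p).
  have := I3 p r (imp p q).
  have := I3 p r (imp r p).
  have := I3 p r (imp (imp p p) p).
  have := I3 p r (imp (imp (imp p (imp r p)) r) r).
  have := I3 p (imp p q) r.
  have := I3 p (imp p q) (imp p r).
  have := I3 p (imp p q) (imp p (imp p r)).
  have := I3 p (imp p q) (imp (imp p p) r).
  have := I3 p (imp p (imp p (imp r q))) q.
  have := I3 p (imp p (imp p (imp r q))) (imp p q).
  have := I3 p (imp p (imp r q)) q.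
  have := I3 p (imp p (imp r q)) (imp p q).
  have := I3 p (imp p (imp r q)) (imp p (imp p q)).
  have := I3 p (imp p (imp r q)) (imp (imp q p) q).
  have := I3 p (imp q q) p.
  have := I3 p (imp q r) r.
  have := I3 p (imp q r) (imp p r).
  have := I3 p (imp q r) (imp p (imp p r)).
  have := I3 p (imp q r) (imp p (imp p (imp p r))).
  have := I3 p (imp q r) (imp (imp p (imp r q)) q).
  have := I3 p (imp q r) (imp (imp (imp p p) p) r).
  have := I3 p (imp q r) (imp (imp (imp p q) r) r).
  have := I3 p (imp r q) (imp (imp (imp p p) p) q).
  have := I3 p (imp r q) (imp (imp (imp p q) r) q).
  have := I3 p (imp r r) p.
  have := I3 p (imp r (imp p q)) q.
  have := I3 p (imp (imp p p) p) p.
  have := I3 p (imp (imp p p) p) q.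
  have := I3 p (imp (imp p p) p) r.
  have := I3 p (imp (imp p p) p) (imp p q).
  have := I3 p (imp (imp p p) p) (imp p r).
  have := I3 p (imp (imp p p) p) (imp q q).
  have := I3 p (imp (imp p p) p) (imp q r).
  have := I3 p (imp (imp p q) p) q.
  have := I3 p (imp (imp p q) r) q.
  have := I3 p (imp (imp p q) (imp q p)) q.
  have := I3 p (imp (imp p r) p) r.
  have := I3 p (imp (imp p r) (imp q r)) r.
  have := I3 p (imp (imp p r) (imp r p)) r.
  have := I3 p (imp (imp p (imp p p)) p) (imp p p).
  have := I3 p (imp (imp p (imp q p)) p) (imp q p).
  have := I3 p (imp (imp p (imp q p)) q) p.
  have := I3 p (imp (imp p (imp q q)) p) (imp q q).
  have := I3 p (imp (imp p (imp q r)) p) (imp q r).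
  have := I3 p (imp (imp p (imp r p)) p) (imp r p).
  have := I3 p (imp (imp p (imp r p)) r) p.
  have := I3 p (imp (imp p (imp r r)) p) (imp r r).
  have := I3 p (imp (imp q q) (imp p p)) p.
  have := I3 p (imp (imp q r) (imp p r)) r.
  have := I3 p (imp (imp q r) (imp p r)) (imp p r).
  have := I3 p (imp (imp q (imp p q)) q) q.
  have := I3 p (imp (imp r p) r) (imp r p).
  have := I3 p (imp (imp r r) (imp p p)) p.
  have := I3 p (imp (imp r (imp p r)) r) r.
  have := I3 p (imp (imp (imp p q) r) r) r.
  have := I3 p (imp (imp (imp p q) r) r) (imp p r).
  have := I3 q r p.
  have := I3 q (imp p p) q.
  have := I3 q (imp p q) p.
  have := I3 q (imp q q) p.
  have := I3 q (imp (imp p p) p) q.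
  have := I3 q (imp (imp p p) p) r.
  have := I3 q (imp (imp p p) (imp q q)) q.
  have := I3 q (imp (imp p r) (imp q r)) r.
  have := I3 q (imp (imp p (imp p p)) p) q.
  have := I3 q (imp (imp p (imp q p)) p) p.
  have := I3 q (imp (imp p (imp q p)) q) q.
  have := I3 q (imp (imp p (imp q q)) p) q.
  have := I3 q (imp (imp p (imp q r)) p) r.
  have := I3 q (imp (imp q q) (imp q p)) q.
  have := I3 q (imp (imp q (imp p q)) q) (imp p q).
  have := I3 r (imp p p) r.
  have := I3 r (imp p r) p.
  have := I3 r (imp r r) p.
  have := I3 r (imp (imp p p) p) p.
  have := I3 r (imp (imp p p) p) (imp r p).
  have := I3 r (imp (imp p p) (imp r r)) r.
  have := I3 r (imp (imp p (imp p p)) p) r.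
  have := I3 r (imp (imp p (imp r p)) p) p.
  have := I3 r (imp (imp p (imp r p)) r) r.
  have := I3 r (imp (imp p (imp r r)) p) r.
  have := I3 r (imp (imp r r) (imp r p)) r.
  have := I3 r (imp (imp r (imp p r)) r) (imp p r).
  have := I3 (imp p p) (imp p q) r.
  have := I3 (imp p p) (imp p q) (imp (imp p p) r).
  have := I3 (imp p p) (imp p (imp p q)) r.
  have := I3 (imp p p) (imp p (imp (imp q p) q)) r.
  have := I3 (imp p q) (imp q (imp (imp q p) q)) r.
  have := I3 (imp p q) (imp r (imp p (imp r p))) r.
  have := I3 (imp p q) (imp r (imp q p)) r.
  have := I3 (imp p q) (imp r (imp (imp p q) r)) r.
  have := I3 (imp p (imp p q)) (imp p (imp r p)) r.
  have := I3 (imp p (imp p q)) (imp q (imp p p)) r.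
  have := I3 (imp p (imp p q)) (imp r (imp q p)) r.
  have := I3 (imp q p) (imp p (imp r q)) q.
  have := I3 (imp q r) (imp p (imp r q)) q.
  have := I3 (imp q r) (imp (imp p p) p) r.
  have := I3 (imp q r) (imp (imp p q) r) r.
  have := I3 (imp r q) (imp (imp p p) p) q.
  have := I3 (imp r q) (imp (imp p q) r) q.
  congruence.
Qed.
Lemma T4 x y b u : (imp (imp x b) (imp (imp (imp x y) b) b)) = (imp u u).
Proof.
  have := D x b (imp (imp y b) b).
  have := D x (imp b y) y.
  have := E3 u x.
  have := I2 y b.
  have := I2 (imp x y) b.
  have := I3 x b y.
  have := K u b (imp y b).
  congruence.
Qed.

Definition filt (S : {set A}) : bool :=
  [forall u, imp u u \in S] &&
  [forall x, forall y, (x \in S) ==> (imp x y \in S) ==> (y \in S)].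

Lemma filt1 S u : filt S -> imp u u \in S.
Proof. by rewrite /filt => /andP[/forallP H _]; apply: H. Qed.

Lemma filtMP S x y : filt S -> x \in S -> imp x y \in S -> y \in S.
Proof.
rewrite /filt => /andP[_ /forallP H] xS xyS.
by move: (H x) => /forallP /(_ y); rewrite xS xyS.
Qed.

Lemma filtR S x y : filt S -> y \in S -> imp x y \in S.
Proof.
move=> fS yS; apply: (filtMP fS yS); rewrite (K y); exact: filt1.
Qed.

Lemma filtG S x : filt S -> filt [set z | imp x z \in S].
Proof.
move=> fS; apply/andP; split.
  by apply/forallP => u; rewrite inE E3 filt1.
apply/forallP => z; apply/forallP => w; rewrite !inE.
apply/implyP => xz; apply/implyP => xzw.
rewrite D in xzw; exact: filtMP xz xzw.
Qed.

Lemma antisym a b : imp a b = imp a a -> imp b a = imp b b -> a = b.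
Proof.
move=> h1 h2.
have h3 := E2 a a. have h4 := E2 a b. have h5 := I2 a b. have h6 := E1 b a.
congruence.
Qed.

Definition hom (f : A -> bool) := forall x y, f (imp x y) = ~~ f x || f y.

Lemma sep a b : imp a b != imp a a -> exists f, hom f /\ f a /\ ~~ f b.
Proof.
move=> nab.
pose P := fun S : {set A} => [&& filt S, a \in S & b \notin S].
have P0 : P [set z | imp a z == imp a a].
  rewrite /P !inE eqxx nab /filt !andbT; apply/andP; split.
    by apply/forallP => u; rewrite inE E3 (E1 a u).
  apply/forallP => z; apply/forallP => w; rewrite !inE.
  apply/implyP => /eqP az; apply/implyP => /eqP azw.
  by rewrite D az E2 in azw; rewrite azw.
case: (@arg_maxnP _ _ P (fun S : {set A} => #|S|) P0) => F PF Fmax.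
case/and3P: PF => fF aF bF.
have C1 : forall x, x \notin F -> imp x b \in F.
  move=> x xF; apply: contraR xF => xbF.
  pose G := [set z | imp x z \in F].
  have FG : F \subset G by apply/subsetP => z zF; rewrite inE filtR.
  have PG : P G by rewrite /P filtG // !inE filtR // xbF.
  have := Fmax _ PG => cG.
  have eFG : F = G by apply/eqP; rewrite eqEcard FG /=; exact: cG.
  by rewrite eFG inE filt1.
have C2 : forall x y, x \notin F -> imp x y \in F.
  move=> x y xF; apply: contraR bF => xyF.
  have h1 := C1 _ xF. have h2 := C1 _ xyF.
  have h3 : imp (imp x b) (imp (imp (imp x y) b) b) \in F by rewrite (T4 x y b b) filt1.
  exact: filtMP fF h2 (filtMP fF h1 h3).
exists (fun x => x \in F); split; last by rewrite aF.
move=> x y; case xF: (x \in F) => /=; last by rewrite C2 // xF.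
case yF: (y \in F); first by rewrite filtR.
apply/negP => xyF; move/negP: yF; apply; exact: filtMP fF xF xyF.
Qed.

End IA.

Theorem corollary4 (A : finType) (imp : A -> A -> A) :
  implication_algebra imp -> has_finite_representation imp.
Proof.
case=> I1 I2 I3.
pose X := {ffun A -> bool}.
pose H := [set f : X | [forall x, forall y, f (imp x y) == ~~ f x || f y]].
pose T := [set p : X * X | (p.1 == p.2) && (p.1 \in H)].
exists X, T, (fun a => [set p in T | p.1 a]); split.
- by move=> a; apply/subsetP => p; rewrite inE => /andP[].
- move=> a b hab; case: (eqVneq a b) => // nab; exfalso.
  have [f [hf fab]] : exists f, hom imp f /\ f a != f b.
    case: (eqVneq (imp a b) (imp a a)) => [e1|n1]; last first.
      by have [f [hf [fa fb]]] := sep I1 I2 I3 n1; exists f; split => //; rewrite fa; case: (f b) fb.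
    case: (eqVneq (imp b a) (imp b b)) => [e2|n2]; last first.
      by have [f [hf [fa fb]]] := sep I1 I2 I3 n2; exists f; split => //; rewrite fa; case: (f a) fb.
    by move: nab; rewrite (antisym I1 I2 I3 e1 e2) eqxx.
  pose g : X := finfun f.
  have gT : (g, g) \in T.
    rewrite inE /= eqxx /= inE; apply/forallP => x; apply/forallP => y.
    by rewrite !ffunE hf.
  move/setP: hab => /(_ (g, g)).
  rewrite !inE /= !ffunE.
  have gH : [forall x, forall y, g (imp x y) == ~~ g x || g y].
    by move: gT; rewrite !inE /= => /andP[].
  by rewrite eqxx gH /= => e; move: fab; rewrite e eqxx.
- move=> a b; apply/setP => -[g g']; rewrite !inE /=.
  case: (g == g') => //=.
  case gH: [forall x, forall y, g (imp x y) == ~~ g x || g y] => //=.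
  move: gH => /forallP /(_ a) /forallP /(_ b) /eqP ->.
  by rewrite andbT.
Qed.
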